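(* Let $f,g$ be holomorphic functions on a neighbourhood of $0$ in $\mathbb{C}^n$ vanishing at $0$, and let $\varepsilon>0$ be sufficiently small. The critical points of the map $$\phi=\frac{f/g}{|f/g|}:\mathbb{S}^{2n-1}_\varepsilon\setminus(L_f\cup L_g)\to\mathbb{S}^1$$ are exactly the points $z=(z_1,\dots,z_n)$ at which the vector $i\,\mathrm{grad}\,\log(f/g)(z)$ is a real multiple of $z$.
   Context: $\mathbb{S}^{2n-1}_\varepsilon$ is the sphere of radius $\varepsilon$ about $0$ in $\mathbb{C}^n$, $L_f=f^{-1}(0)\cap\mathbb{S}^{2n-1}_\varepsilon$ and $L_g=g^{-1}(0)\cap\mathbb{S}^{2n-1}_\varepsilon$. For a (meromorphic) function $h$, $\mathrm{grad}\,h=\big(\overline{\partial h/\partial z_1},\dots,\overline{\partial h/\partial z_n}\big)$; thus $\mathrm{grad}\,\log(f/g)$ has $j$-th component $\overline{(\partial f/\partial z_j)/f-(\partial g/\partial z_j)/g}$, defined off $(fg)^{-1}(0)$. *)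

(* Defs.v *)
(* C^n is 'rV[R[i]]_n, which is a
   normedModType over R[i], so "differentiable" there is complex (Frechet)
   differentiability, i.e. holomorphy. *)
From HB Require Import structures.
From mathcomp Require Import all_boot all_order all_algebra.
From mathcomp Require Import all_classical all_reals all_analysis.
From mathcomp Require Import complex.
Import Order.TTheory GRing.Theory Num.Theory numFieldNormedType.Exports.
Local Open Scope ring_scope.
Local Open Scope classical_set_scope.

Set Implicit Arguments.
Unset Strict Implicit.
Unset Printing Implicit Defensive.

Notation Cn R n := (('rV[R[i]]_n : normedModType R[i]) : Type) (only parsing).

Definition hnorm2 (R : realType) (n : nat) (z : Cn R n) : R[i] :=
  \sum_(j < n) z ord0 j * (z ord0 j)^*.

Definition sphere (R : realType) (n : nat) (eps : R) : set (Cn R n) :=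
  [set z | hnorm2 z = ((eps ^+ 2)%:C)%C].

Definition holomorphic_on (R : realType) (n : nat) (U : set (Cn R n))
  (f : Cn R n -> (R[i])^o) : Prop :=
  open U /\ forall z, U z -> differentiable f z.

Definition cpartial (R : realType) (n : nat) (f : Cn R n -> (R[i])^o)
  (z : Cn R n) (j : 'I_n) : R[i] := 'D_('e_j) f z.

Definition grad_log_quot (R : realType) (n : nat) (f g : Cn R n -> (R[i])^o)
  (z : Cn R n) : Cn R n :=
  \row_j (cpartial f z j / f z - cpartial g z j / g z)^*.

Definition phi (R : realType) (n : nat) (f g : Cn R n -> (R[i])^o)
  (z : Cn R n) : (R[i])^o :=
  (f z / g z) / `|f z / g z|.

Definition is_rderiv (R : realType) (n : nat) (F : Cn R n -> (R[i])^o)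
  (z v : Cn R n) (w : (R[i])^o) : Prop :=
  (fun t : R => (F (z + (t%:C)%C *: v) - F z) / (t%:C)%C) x @[x --> (0 : R)^'] --> w.

Definition tangent_sphere (R : realType) (n : nat) (z v : Cn R n) : Prop :=
  'Re (\sum_(j < n) v ord0 j * (z ord0 j)^*) = 0.

Definition tangent_circle (R : realType) (u w : R[i]) : Prop :=
  'Re (w * u^*) = 0.

Definition critical_point (R : realType) (n : nat) (f g : Cn R n -> (R[i])^o)
  (eps : R) (z : Cn R n) : Prop :=
  [/\ sphere eps z, f z != 0, g z != 0 &
   ~ (forall w : (R[i])^o, tangent_circle (phi f g z) w ->
        exists v : Cn R n, tangent_sphere z v /\ is_rderiv (phi f g) z v w)].

(* Main.v *)
Require Import Defs.
From HB Require Import structures.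
From mathcomp Require Import all_boot all_order all_algebra.
From mathcomp Require Import all_classical all_reals all_analysis.
From mathcomp Require Import complex.
Import Order.TTheory GRing.Theory Num.Theory numFieldNormedType.Exports.
Local Open Scope ring_scope.
Local Open Scope classical_set_scope.
Set Implicit Arguments.
Unset Strict Implicit.
Unset Printing Implicit Defensive.
From mathcomp Require Import ring.
Ltac fld := field; repeat (apply/andP; split); try assumption.
Section S.
Variable R : realType.
Local Notation C := ((R[i] : numFieldType) : Type).
Lemma normC_real (t : R) : `|(t%:C)%C| = ((`|t|)%:C)%C :> R[i].
Proof. by rewrite normc_def /= expr0n /= addr0 sqrtr_sqr. Qed.
Lemma kcvg : (fun t : R => (t%:C)%C) @ (0:R)^' --> (0 : (R[i] : numFieldType))^'.
Proof.
move=> P; rewrite /dnbhs/within /= => /nbhs_ballP[e /= e0 He].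
apply/nbhs_ballP.
have /andP[/eqP eI eR] : (complex.Im e == 0) && (0 < complex.Re e) by move: e0; rewrite ltcE.
exists (complex.Re e) => // t /= ht tn0; apply: He.
  rewrite /ball_ /= sub0r normrN normC_real.
  rewrite /ball /= sub0r normrN in ht.
  by rewrite ltcE /= eI eqxx /=.
by rewrite eq_complex /= negb_and tn0.
Qed.
Lemma kc : (fun t : R => (t%:C)%C) @ (0:R)^' --> (0 : C).
Proof. move=> P HP; apply: kcvg; exact: nbhs_dnbhs. Qed.
Lemma kn : \forall t \near (0:R)^', (t%:C)%C != 0 :> C.
Proof. near=> t. rewrite eq_complex /= negb_and. apply/orP; left. near: t. exact: nbhs_dnbhs_neq.
Unshelve. all: by end_near. Qed.
Definition hasD (f : R -> C) (f0 A : C) :=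
  (fun t => (f t - f0) / (t%:C)%C) @ (0:R)^' --> A.
Lemma D_cont f f0 A : hasD f f0 A -> f @ (0:R)^' --> f0.
Proof.
move=> h.
have e : {near (0:R)^', (fun t => f0 + (t%:C)%C * ((f t - f0)/(t%:C)%C)) =1 f}.
  near=> t.
  have tn : (t%:C)%C != 0 :> C by near: t; exact: kn.
  by rewrite /=; field.
apply: cvg_trans (near_eq_cvg e) _.
have h2 : (fun t => f0 + (t%:C)%C * ((f t - f0)/(t%:C)%C)) @ (0:R)^' --> f0 + 0 * A.
  apply: cvgD; first exact: cvg_cst.
  apply: cvgM; [exact: kc| exact: h].
by rewrite mul0r addr0 in h2.
Unshelve. all: by end_near. Qed.
Lemma cvgJ {T} {F : set_system T} {FF : Filter F} (f : T -> C) (a : C) :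
  f @ F --> a -> (fun x => (f x)^*) @ F --> a^*.
Proof.
move=> /cvgrPdist_lt H; apply/cvgrPdist_lt => e e0.
by apply: filterS (H e e0) => x; rewrite -rmorphB norm_conjC.
Qed.
Lemma nearnz (f : R -> C) f0 : f @ (0:R)^' --> f0 -> f0 != 0 ->
  \forall t \near (0:R)^', f t != 0.
Proof.
move=> h f0n; move: h => /cvgr_dist_lt /(_ `|f0|); rewrite normr_gt0 => /(_ f0n).
apply: filterS => t ht; apply/negP => /eqP ft0.
by rewrite ft0 subr0 ltxx in ht.
Qed.
Lemma conjt (t : R) : ((t%:C)%C : C)^* = (t%:C)%C.
Proof. by rewrite conj_Creal // complex_real. Qed.

Lemma D_div f g f0 g0 A B : g0 != 0 -> hasD f f0 A -> hasD g g0 B ->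
  hasD (fun t => f t / g t) (f0/g0) ((A * g0 - f0 * B) / (g0 * g0)).
Proof.
move=> g0n hf hg.
have gc := D_cont hg.
have e : {near (0:R)^', (fun t => ((f t - f0)/(t%:C)%C * g0 - f0 * ((g t - g0)/(t%:C)%C)) / (g t * g0)) =1 (fun t => (f t / g t - f0/g0)/(t%:C)%C)}.
  near=> t.
  have tn : (t%:C)%C != 0 :> C by near: t; exact: kn.
  have gn : g t != 0 by near: t; exact: nearnz gc g0n.
  by rewrite /=; fld.
have L1 : (fun t => (f t - f0)/(t%:C)%C * g0) @ (0:R)^' --> A * g0.
  by apply: cvgM; [exact: hf | exact: cvg_cst].
have L2 : (fun t => f0 * ((g t - g0)/(t%:C)%C)) @ (0:R)^' --> f0 * B.
  by apply: cvgM; [exact: cvg_cst | exact: hg].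
have L3 : (fun t => (g t * g0)^-1) @ (0:R)^' --> (g0 * g0)^-1.
  apply: cvgV; first by rewrite mulf_neq0.
  by apply: cvgM; [exact: gc | exact: cvg_cst].
have L4 := cvgM (cvgB L1 L2) L3.
rewrite /hasD; apply: cvg_trans (near_eq_cvg e) _.
exact: L4.
Unshelve. all: by end_near. Qed.
Lemma D_norm f f0 A : f0 != 0 -> hasD f f0 A ->
  hasD (fun t => `|f t|) `|f0| ((A * f0^* + f0 * A^*) / (`|f0| + `|f0|)).
Proof.
move=> f0n hf.
have fc := D_cont hf.
have e : {near (0:R)^', (fun t => ((f t - f0)/(t%:C)%C * (f t)^* + f0 * ((f t - f0)/(t%:C)%C)^*) / (`|f t| + `|f0|)) =1 (fun t => (`|f t| - `|f0|)/(t%:C)%C)}.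
  near=> t.
  have tn : (t%:C)%C != 0 :> C by near: t; exact: kn.
  have sp : 0 < `|f t| + `|f0| by rewrite ltr_wpDl // normr_gt0.
  have sn : `|f t| + `|f0| != 0 by rewrite gt_eqF.
  rewrite /= rmorphM fmorphV rmorphB /=.
  have ct : forall x : C, x \is Num.real -> x^* = x by move=> x; exact: conj_Creal.
  rewrite [((_%:C)%C)^*]ct; last by rewrite complex_real.
  have -> : (f t - f0) / (t%:C)%C * (f t)^* + f0 * (((f t)^* - f0^*) / (t%:C)%C) = (f t * (f t)^* - f0 * f0^*) / (t%:C)%C by fld.
  rewrite -!normCK.
  by fld.
have L1 : (fun t => (f t - f0)/(t%:C)%C * (f t)^*) @ (0:R)^' --> A * f0^*.
  by apply: cvgM; [exact: hf | exact: cvgJ fc].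
have L2 : (fun t => f0 * ((f t - f0)/(t%:C)%C)^*) @ (0:R)^' --> f0 * A^*.
  by apply: cvgM; [exact: cvg_cst | exact: cvgJ hf].
have L3 : (fun t => (`|f t| + `|f0|)^-1) @ (0:R)^' --> (`|f0| + `|f0|)^-1.
  apply: cvgV; first by rewrite gt_eqF // addr_gt0 // normr_gt0.
  by apply: cvgD; [exact: cvg_norm fc | exact: cvg_cst].
have L4 := cvgM (cvgD L1 L2) L3.
rewrite /hasD; apply: cvg_trans (near_eq_cvg e) _.
exact: L4.
Unshelve. all: by end_near. Qed.
Lemma alg1 (h X : C) : h * X * h^* + h * (h * X)^* = `|h| ^+ 2 * (X + X^*).
Proof. by rewrite rmorphM normCK; ring. Qed.

Lemma alg2 (h X N : C) : N != 0 ->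
  (h * X * N - h * (N ^+ 2 * (X + X^*) / (N + N))) / (N * N) = h / N * ((X - X^*) / 2).
Proof.
move=> Nn.
have two : (2 : C) != 0 by rewrite pnatr_eq0.
have NN : N + N != 0 by rewrite -mulr2n -mulr_natr mulf_neq0.
by fld.
Qed.

Lemma D_phi f g f0 g0 A B : f0 != 0 -> g0 != 0 -> hasD f f0 A -> hasD g g0 B ->
  hasD (fun t => (f t / g t) / `|f t / g t|) ((f0 / g0) / `|f0 / g0|)
    ((f0 / g0) / `|f0 / g0| * (((A / f0 - B / g0) - (A / f0 - B / g0)^*) / 2)).
Proof.
move=> f0n g0n hf hg.
have hh := D_div g0n hf hg.
have h0n : f0 / g0 != 0 by rewrite mulf_neq0 // invr_eq0.
have N0n : `|f0 / g0| != 0 by rewrite normr_eq0.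
have hn := D_norm h0n hh.
have := D_div N0n hh hn.
set h0 := f0 / g0; set N0 := `|h0|; set X := A / f0 - B / g0.
have eH : (A * g0 - f0 * B) / (g0 * g0) = h0 * X by rewrite /h0 /X; fld.
rewrite eH.
have eN := alg1 h0 X.
rewrite eN.
by rewrite alg2.
Qed.
Lemma rdir (n : nat) (F : Cn R n -> (R[i])^o) (z v : Cn R n) :
  differentiable F z ->
  (fun t : R => (F (z + (t%:C)%C *: v) - F z) / (t%:C)%C) x @[x --> (0 : R)^'] --> 'd F z v.
Proof.
move=> dF.
have hd := @diff_derivable _ _ _ F z v dF.
rewrite -(deriveE v dF) /derive.
have := cvg_comp _ _ kcvg hd.
apply: cvg_trans; apply: near_eq_cvg; near=> t => /=.
by rewrite [_ *: v + z]addrC [RHS]mulrC.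
Unshelve. all: by end_near. Qed.

Definition Xd n (f g : Cn R n -> (R[i])^o) z v : C := 'd f z v / f z - 'd g z v / g z.

Lemma rderiv_phi n (f g : Cn R n -> (R[i])^o) z v :
  differentiable f z -> differentiable g z -> f z != 0 -> g z != 0 ->
  is_rderiv (phi f g) z v (phi f g z * ((Xd f g z v - (Xd f g z v)^*) / 2)).
Proof.
move=> df dg fn gn.
exact: (D_phi fn gn (rdir df) (rdir dg)).
Qed.

Lemma rderiv_uniq n (F : Cn R n -> (R[i])^o) z v w w' :
  is_rderiv F z v w -> is_rderiv F z v w' -> w = w'.
Proof.
move=> h1 h2; exact: (cvg_unique (@norm_hausdorff _ _) h1 h2).
Qed.
Definition ip n (v y : Cn R n) : C := \sum_(j < n) v ord0 j * (y ord0 j)^*.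

Lemma ipZl n (v y : Cn R n) (c : C) : ip (c *: v) y = c * ip v y.
Proof. rewrite /ip mulr_sumr; apply: eq_bigr => j _; by rewrite !mxE mulrA. Qed.
Lemma ipZr n (v y : Cn R n) (c : C) : ip v (c *: y) = c^* * ip v y.
Proof. rewrite /ip mulr_sumr; apply: eq_bigr => j _; by rewrite !mxE rmorphM mulrCA. Qed.
Lemma ipBl n (v w y : Cn R n) : ip (v - w) y = ip v y - ip w y.
Proof. rewrite /ip -sumrB; apply: eq_bigr => j _; by rewrite !mxE mulrBl. Qed.
Lemma ipBr n (v y w : Cn R n) : ip v (y - w) = ip v y - ip v w.
Proof. rewrite /ip -sumrB; apply: eq_bigr => j _; by rewrite !mxE rmorphB mulrBr. Qed.

Lemma realC (s : R) : ((s%:C)%C : C) \is Num.real.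
Proof. by rewrite complex_real. Qed.

Lemma ip_self0 n (v : Cn R n) : 'Re (ip v v) = 0 -> v = 0.
Proof.
have r : ip v v \is Num.real.
  by apply: rpred_sum => j _; rewrite -normCK rpredX // normr_real.
rewrite (Creal_ReP _ r) /ip => /psumr_eq0P H.
apply/rowP => j; rewrite mxE.
have := H (fun j _ => mul_conjC_ge0 _) j isT; rewrite -normCK => /eqP.
by rewrite expf_eq0 /= normr_eq0 => /eqP.
Qed.
Lemma lin n (z y : Cn R n) (eps : R) : hnorm2 z = ((eps ^+ 2)%:C)%C -> 0 < eps ->
  (forall v, 'Re (ip v z) = 0 -> 'Re (ip v y) = 0) ->
  exists lam : R, y = ((lam%:C)%C : C) *: z.
Proof.
move=> hz e0 H.
have rho : ip z z = ((eps ^+ 2)%:C)%C by [].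
have rhon : ip z z != 0 by rewrite rho eq_complex /= negb_and expf_eq0 /= (gt_eqF e0).
have rhor : ip z z \is Num.real by rewrite rho realC.
set mu := 'Re (ip y z) / ip z z.
have mur : mu \is Num.real by rewrite rpredM // ?rpredV.
have hv : 'Re (ip (y - mu *: z) z) = 0.
  rewrite ipBl ipZl raddfB /= /mu divfK //.
  by rewrite (Creal_ReP _ (Creal_Re (ip y z))) subrr.
have hy := H _ hv.
have : 'Re (ip (y - mu *: z) (y - mu *: z)) = 0.
  by rewrite ipBr ipZr raddfB /= hy (conj_Creal mur) ReMl // hv mulr0 subrr.
move/ip_self0/eqP; rewrite subr_eq0 => /eqP ->.
by exists (complex.Re mu); rewrite RRe_real.
Qed.

Lemma dsum n (f : Cn R n -> (R[i])^o) z v : differentiable f z ->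
  'd f z v = \sum_(j < n) v ord0 j * cpartial f z j.
Proof.
move=> df; rewrite {1}(row_sum_delta v) linear_sum.
apply: eq_bigr => j _; by rewrite linearZ /cpartial deriveE.
Qed.

Lemma alg_i (a w : C) : 'i * (a * (- 'i * w)) = a * w.
Proof.
rewrite mulNr !mulrN mulrCA.
by rewrite [in 'i * ('i * w)]mulrA mulCii mulN1r mulrN opprK.
Qed.

Definition dS n (F : Cn R n -> (R[i])^o) (z v : Cn R n) : C :=
  \sum_(j < n) v ord0 j * cpartial F z j.

Lemma rdir2 n (F : Cn R n -> (R[i])^o) (z v : Cn R n) :
  differentiable F z ->
  (fun t : R => (F (z + (t%:C)%C *: v) - F z) / (t%:C)%C) x @[x --> (0 : R)^'] --> (dS F z v : (R[i])^o).
Proof. by move=> dF; rewrite /dS -(dsum v dF); exact: rdir. Qed.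

Definition Xs n (f g : Cn R n -> (R[i])^o) (z v : Cn R n) : C :=
  dS f z v / f z - dS g z v / g z.

Lemma rdir3 n (F : Cn R n -> (R[i])^o) (z v : Cn R n) :
  differentiable F z -> hasD (fun t => F (z + (t%:C)%C *: v)) (F z) (dS F z v).
Proof. move=> dF. exact: rdir2. Qed.

Lemma rderiv_phi2 n (f g : Cn R n -> (R[i])^o) z v :
  differentiable f z -> differentiable g z -> f z != 0 -> g z != 0 ->
  is_rderiv (phi f g) z v (phi f g z * ((Xs f g z v - (Xs f g z v)^*) / 2)).
Proof.
move=> df dg fn gn.
have H := D_phi fn gn (rdir3 (v:=v) df) (rdir3 (v:=v) dg).
exact: H.
Qed.
Lemma alg_sum n (u c d : 'I_n -> C) (a b : C) :
  (\sum_(j < n) u j * c j) / a - (\sum_(j < n) u j * d j) / b =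
  'i * \sum_(j < n) u j * ('i * (c j / a - d j / b)^*)^*.
Proof.
rewrite !mulr_suml -sumrB mulr_sumr; apply: eq_bigr => j _.
by rewrite rmorphM /= conjCi conjCK alg_i mulrBr !mulrA.
Qed.

Lemma Xs_ip n (f g : Cn R n -> (R[i])^o) z v :
  Xs f g z v = 'i * ip v ('i *: grad_log_quot f g z).
Proof.
rewrite /Xs /dS /ip.
have E : \sum_(j < n) v ord0 j * (('i *: grad_log_quot f g z) ord0 j)^* =
   \sum_(j < n) v ord0 j * ('i * (cpartial f z j / f z - cpartial g z j / g z)^*)^*.
  by apply: eq_bigr => j _; rewrite !mxE.
rewrite E.
exact: alg_sum.
Qed.
Lemma iE : ('i)%C = 'i :> C.
Proof. reflexivity. Qed.
Lemma ballU n (U : set (Cn R n)) : U 0 -> open U ->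
  exists2 e : R, 0 < e & forall (eps : R) (z : Cn R n), 0 < eps < e -> hnorm2 z = ((eps ^+ 2)%:C)%C -> U z.
Proof.
move=> U0 oU.
have : nbhs (0 : Cn R n) U by apply: open_nbhs_nbhs; split.
move=> /nbhs_normP[e /= e0 He].
have /andP[/eqP eI eR] : (complex.Im e == 0) && (0 < complex.Re e) by move: e0; rewrite ltcE.
exists (complex.Re e) => // eps z /andP[ep epe] hz.
apply: He.
have eE : e = ((complex.Re e)%:C)%C by apply/eqP; rewrite eq_complex /= eI !eqxx.
have bnd : forall j, `|z ord0 j| <= ((eps%:C)%C : C).
  move=> j.
  have h2 : `|z ord0 j| ^+ 2 <= ((eps%:C)%C : C) ^+ 2.
    have -> : ((eps%:C)%C : C) ^+ 2 = hnorm2 z by rewrite hz rmorphXn.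
    rewrite normCK /hnorm2 (bigD1 j) //= lerDl.
    by apply: sumr_ge0 => k _; exact: mul_conjC_ge0.
  by rewrite -(@ler_pXn2r _ 2) // nnegrE ?ler0c ?ltW.
rewrite /ball_ /= sub0r normrN.
have hl : ((eps%:C)%C : C) < e by rewrite eE ltcR.
case: (eqVneq `|z| 0) => [->|nz]; first by [].
have [[i1 i2] hi] := mx_norm_neq0 nz.
have -> : `|z| = mx_norm z by [].
rewrite hi.
rewrite /= (ord1 i1).
exact: le_lt_trans (bnd i2) hl.
Qed.

Lemma alg3 (p : C) : (('i * p) - ('i * p)^*) / 2 = 'i * 'Re p.
Proof. by rewrite ReE rmorphM /= conjCi mulNr opprK -mulrDr mulrA. Qed.

Lemma D_phiV f g f0 g0 A B V : f0 != 0 -> g0 != 0 -> hasD f f0 A -> hasD g g0 B ->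
  V = (f0 / g0) / `|f0 / g0| * (((A / f0 - B / g0) - (A / f0 - B / g0)^*) / 2) ->
  hasD (fun t => (f t / g t) / `|f t / g t|) ((f0 / g0) / `|f0 / g0|) V.
Proof. by move=> ? ? ? ? ->; exact: D_phi. Qed.

Lemma Dv_lem n (f g : Cn R n -> (R[i])^o) z v :
  differentiable f z -> differentiable g z -> f z != 0 -> g z != 0 ->
  is_rderiv (phi f g) z v (phi f g z * ('i * 'Re (ip v ('i *: grad_log_quot f g z)))).
Proof.
move=> df dg fn gn.
have e : (phi f g z * ('i * 'Re (ip v ('i *: grad_log_quot f g z))) : C) =
   (f z / g z) / `|f z / g z| * ((Xs f g z v - (Xs f g z v)^*)/2).
  by rewrite Xs_ip alg3.
exact: (D_phiV fn gn (rdir3 (v:=v) df) (rdir3 (v:=v) dg) e).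
Qed.
End S.

Unset Implicit Arguments.
Set Strict Implicit.

Theorem lemma2p2 (R : realType) (n : nat) (U : set (Cn R n))
  (f g : Cn R n -> (R[i])^o) :
  U 0 -> holomorphic_on U f -> holomorphic_on U g ->
  f 0 = 0 -> g 0 = 0 ->
  exists e0 : R, 0 < e0 /\
    forall eps : R, 0 < eps < e0 ->
      forall z : Cn R n,
        critical_point f g eps z <->
        [/\ sphere eps z, f z != 0, g z != 0 &
         exists lam : R, ('i)%C *: grad_log_quot f g z = (lam%:C)%C *: z].
Proof.
move=> U0 [oU hfU] [_ hgU] _ _.
have [e e0 He] := ballU U0 oU.
exists e; split => // eps epsr z.
have ep : 0 < eps by case/andP: epsr.
suff key : sphere eps z -> f z != 0 -> g z != 0 ->
  ((~ forall w : (R[i])^o, tangent_circle (phi f g z) w ->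
        exists v : Cn R n, tangent_sphere z v /\ is_rderiv (phi f g) z v w) <->
   exists lam : R, ('i)%C *: grad_log_quot f g z = (lam%:C)%C *: z).
  split => [[Sz fz gz nc]|[Sz fz gz ex]]; split => //; by apply/(key Sz fz gz).
move=> Sz fz gz.
have Uz := He eps z epsr Sz.
have df := hfU z Uz; have dg := hgU z Uz.
set y := ('i)%C *: grad_log_quot f g z.
set p0 := phi f g z.
have Dv : forall v, is_rderiv (phi f g) z v (p0 * ('i * 'Re (ip v y))).
  by move=> v; exact: Dv_lem.
have hn : f z / g z != 0 by rewrite mulf_neq0 // invr_eq0.
have p0n : p0 != 0 by rewrite /p0 /phi mulf_neq0 // invr_eq0 normr_eq0.
have p0u : p0 * p0^* = 1.
  rewrite -normCK /p0 /phi normrM normfV normr_id divff ?expr1n //.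
  by rewrite normr_eq0.
split.
- move=> nc; apply: (lin Sz ep) => v tv.
  case: (eqVneq ('Re (ip v y)) 0) => // nz; exfalso; apply: nc => w tw.
  set r := 'Re (ip v y).
  have rc : 'Re (w * p0^*) = 0 := tw.
  have rr : r \is Num.real := Creal_Re _.
  set c := w * p0^*.
  set s := complex.Re ('Im c / r).
  have sE : ((s%:C)%C : (R[i] : numFieldType)) = 'Im c / r.
    by rewrite /s RRe_real // rpredM // ?rpredV.
  exists ((s%:C)%C *: v); split.
    change ('Re (ip ((s%:C)%C *: v) z) = 0).
    by rewrite ipZl ReMl ?realC // tv mulr0.
  have -> : w = p0 * ('i * 'Re (ip ((s%:C)%C *: v) y)).
    rewrite ipZl ReMl ?realC // -/r sE divfK //.
    have cE : c = 'i * 'Im c by rewrite {1}[c]Crect rc add0r.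
    by rewrite -cE /c mulrCA p0u mulr1.
  exact: Dv.
- case=> lam hy surj.
  have tw : tangent_circle p0 (p0 * 'i).
    by rewrite /tangent_circle mulrAC p0u mul1r Re_i.
  have [v [tv hv]] := surj _ tw.
  have := rderiv_uniq hv (Dv v).
  have tv' : 'Re (ip v z) = 0 := tv.
  rewrite hy ipZr conj_Creal ?realC // ReMl ?realC // tv' mulr0 mulr0.
  move=> h; apply: (negP (mulf_neq0 p0n (neq0Ci _))).
  by apply/eqP; rewrite h; exact: mulr0.
Qed.
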